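(* Let $\zeta(r,n)=n^{-1/2}/(52r^2)$. There is no infinite family of megastars that is up-to-$\zeta$ fixating.
   Context: Moran process: given a directed graph $G$ and fitness $r>1$, one vertex (the initial mutant) is a mutant, the rest non-mutants. At each step a vertex $v$ is chosen with probability proportional to fitness (mutants $r$, non-mutants $1$), an out-neighbour $w$ of $v$ is chosen uniformly at random and the state of $v$ is copied to $w$. Extinction: eventually no mutants. An infinite family $\Upsilon$ of directed graphs is up-to-$\zeta$ fixating if for every $r>1$ there is $n_0$ such that for every $G\in\Upsilon$ with $n\ge n_0$ vertices, the extinction probability of the Moran process with fitness $r$ on $G$ from a uniformly random initial mutant is at most $\zeta(r,n)$. The $(k,\ell,m)$-megastar (for positive integers $k,\ell,m$): disjoint union of reservoirs $R_1,\dots,R_\ell$ (size $m$), cliques $K_1,\dots,K_\ell$ (size $k$), feeders $a_1,\dots,a_\ell$, and centre $v^*$; edges from $v^*$ to all reservoir vertices, from each vertex of $R_i$ to $a_i$, from $a_i$ to each vertex of $K_i$, both directions between distinct vertices of each $K_i$, and from every clique vertex to $v^*$. An infinite family of megastars is an infinite set of such graphs. *)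

(* Defs.v *)
From HB Require Import structures.
From mathcomp Require Import all_boot all_order all_algebra.
From mathcomp Require Import all_classical all_reals all_analysis.
Set Implicit Arguments. Unset Strict Implicit. Unset Printing Implicit Defensive.
Import Order.TTheory GRing.Theory Num.Theory numFieldNormedType.Exports.
Local Open Scope ring_scope.

Section Moran.
Variables (R : realType) (V : finType) (e : rel V) (r : R).

(* fitness of vertex v in state S (S = set of mutants) *)
Definition moran_fit (S : {set V}) (v : V) : R := if v \in S then r else 1.
Definition moran_totfit (S : {set V}) : R := \sum_v moran_fit S v.
Definition outdeg (v : V) : nat := #|[set w | e v w]|.
(* v reproduces onto its out-neighbour w: the state of v is copied to w *)
Definition moran_step (S : {set V}) (v w : V) : {set V} :=
  if v \in S then w |: S else S :\ w.
Definition moran_trans (S S' : {set V}) : R :=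
  \sum_v \sum_(w | e v w)
     (moran_fit S v / moran_totfit S) * (outdeg v)%:R^-1
     * (moran_step S v w == S')%:R.
Fixpoint moran_ext_by (t : nat) (S : {set V}) : R :=
  match t with
  | 0 => (S == finset.set0)%:R
  | t'.+1 => \sum_(S' : {set V}) moran_trans S S' * moran_ext_by t' S'
  end.
(* extinction probability from S: probability of eventually reaching the
   (absorbing) all-non-mutant state = lim_t P(no mutants at time t) *)
Definition moran_extinction (S : {set V}) : R :=
  limn (fun t => moran_ext_by t S).
Definition moran_extinction_unif : R :=
  #|V|%:R^-1 * \sum_v moran_extinction [set v].
End Moran.

(* None = centre v*;  Some (inl (inl (i,j))) = j-th vertex of reservoir R_i;
   Some (inl (inr i)) = feeder a_i;  Some (inr (i,j)) = j-th vertex of clique K_i *)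
Definition megastar_vertex (k l m : nat) : finType :=
  option ((('I_l * 'I_m) + 'I_l) + ('I_l * 'I_k))%type.

Definition megastar_edge (k l m : nat) : rel (megastar_vertex k l m) :=
  fun x y =>
  match x, y with
  | None, Some (inl (inl _)) => true
  | Some (inl (inl (i, _))), Some (inl (inr i')) => i == i'
  | Some (inl (inr i)), Some (inr (i', _)) => i == i'
  | Some (inr (i, j)), Some (inr (i', j')) => (i == i') && (j != j')
  | Some (inr _), None => true
  | _, _ => false
  end.

Definition megastar_extinction (R : realType) (r : R) (k l m : nat) : R :=
  moran_extinction_unif (@megastar_edge k l m) r.

Definition megastar_family_upto_fixating (R : realType) (zeta : R -> nat -> R)
    (F : set (nat * nat * nat)) : Prop :=
  forall r : R, 1 < r -> exists n0 : nat, forall k l m : nat,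
    F (k, l, m) -> (n0 <= #|megastar_vertex k l m|)%N ->
    megastar_extinction r k l m <= zeta r #|megastar_vertex k l m|.

(* Main.v *)
Require Import Defs.
From HB Require Import structures.
From mathcomp Require Import all_boot all_order all_algebra.
From mathcomp Require Import all_classical all_reals all_analysis.
From mathcomp Require Import ring lra zify.
From Stdlib Require Import Lia.
Import Order.TTheory GRing.Theory Num.Theory numFieldNormedType.Exports.
Local Open Scope ring_scope.

Section Gen.
Variables (R : realType) (V : finType) (e : rel V) (r : R).
Hypothesis r0 : 0 < r.
Hypothesis outP : forall v, (0 < outdeg e v)%N.
Variable v0 : V.

Local Notation fit := (@moran_fit R V r).
Local Notation tot := (@moran_totfit R V r).
Local Notation trans := (moran_trans e r).
Local Notation ext := (moran_ext_by e r).
Local Notation q := (moran_extinction e r).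

Definition cw (S : {set V}) (v : V) : R := fit S v / tot S * (outdeg e v)%:R^-1.

Lemma fit_gt0 S v : 0 < fit S v.
Proof. by rewrite /moran_fit; case: ifP. Qed.

Lemma tot_gt0 S : 0 < tot S.
Proof.
rewrite /moran_totfit (bigD1 v0) //= ltr_pwDl ?fit_gt0 //.
by apply: sumr_ge0 => v _; apply/ltW/fit_gt0.
Qed.

Lemma cw_ge0 S v : 0 <= cw S v.
Proof.
rewrite /cw mulr_ge0 ?invr_ge0 ?ler0n // mulr_ge0 ?invr_ge0 ?ltW ?fit_gt0 //.
exact: tot_gt0.
Qed.

Lemma sum_out v : \sum_(w | e v w) (outdeg e v)%:R^-1 = 1 :> R.
Proof.
rewrite (eq_bigl (fun w => w \in [set w | e v w])) => [|w]; last by rewrite inE.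
rewrite sumr_const -/(outdeg e v) -[_ *+ _]mulr_natr mulVf //.
by rewrite pnatr_eq0 -lt0n outP.
Qed.

Lemma sum_cw_out S v : \sum_(w | e v w) cw S v = fit S v / tot S.
Proof. by rewrite /cw -big_distrr /= sum_out mulr1. Qed.

Lemma trans_expand S (g : {set V} -> R) :
  \sum_S' trans S S' * g S' =
  \sum_v \sum_(w | e v w) cw S v * g (moran_step S v w).
Proof.
rewrite /moran_trans; under eq_bigr do rewrite big_distrl /=.
rewrite exchange_big; apply: eq_bigr => v _.
under eq_bigr do rewrite big_distrl /=.
rewrite exchange_big /=; apply: eq_bigr => w _.
rewrite (bigD1 (moran_step S v w)) //= eqxx mulr1 big1 ?addr0 //.
by move=> S' /negbTE; rewrite eq_sym => ->; rewrite mulr0 mul0r.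
Qed.

Lemma total S : \sum_v \sum_(w | e v w) cw S v = 1.
Proof.
under eq_bigr do rewrite sum_cw_out.
by rewrite -mulr_suml mulfV // gt_eqF // (tot_gt0 S).
Qed.

Lemma avg_bounds S (g : {set V} -> R) :
  (forall S', 0 <= g S' <= 1) ->
  0 <= \sum_v \sum_(w | e v w) cw S v * g (moran_step S v w) <= 1.
Proof.
move=> hg; apply/andP; split.
  by apply: sumr_ge0 => v _; apply: sumr_ge0 => w _; rewrite mulr_ge0 ?cw_ge0 //; case/andP: (hg (moran_step S v w)).
rewrite -(total S); apply: ler_sum => v _; apply: ler_sum => w _.
by rewrite ler_piMr ?cw_ge0 //; case/andP: (hg (moran_step S v w)).
Qed.

Lemma ext_S t S : ext t.+1 S = \sum_v \sum_(w | e v w) cw S v * ext t (moran_step S v w).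
Proof. by rewrite /= trans_expand. Qed.

Lemma ext_set0 t : ext t finset.set0 = 1.
Proof.
elim: t => [|t IH]; first by rewrite /= eqxx.
rewrite ext_S.
rewrite -(total finset.set0); apply: eq_bigr => v _; apply: eq_bigr => w _.
by rewrite /moran_step inE finset.set0D IH mulr1.
Qed.

Lemma ext_bounds t S : 0 <= ext t S <= 1.
Proof.
elim: t S => [|t IH] S; first by rewrite /=; case: eqP; rewrite ?ler01 ?lexx.
by rewrite ext_S; apply: avg_bounds.
Qed.

Lemma ext_mono t S : ext t S <= ext t.+1 S.
Proof.
elim: t S => [|t IH] S.
  rewrite [ext 0 S]/=. case: eqP => [->|_]; first by rewrite ext_set0.
  by case/andP: (ext_bounds 1 S).
rewrite (ext_S t.+1) ext_S; apply: ler_sum => v _; apply: ler_sum => w _.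
by rewrite ler_wpM2l ?cw_ge0.
Qed.

Lemma ext_nd S : nondecreasing_seq (fun t => ext t S).
Proof. by apply/nondecreasing_seqP => t; apply: ext_mono. Qed.

Lemma ext_cvg S : cvgn (fun t => ext t S).
Proof.
apply: nondecreasing_is_cvgn; first exact: ext_nd.
by exists 1 => _ [t _ <-]; case/andP: (ext_bounds t S).
Qed.

Lemma ext_le_q t S : ext t S <= q S.
Proof. exact: (nondecreasing_cvgn_le (ext_nd S) (ext_cvg S)). Qed.

Lemma q_bounds S : 0 <= q S <= 1.
Proof.
apply/andP; split.
  by apply: le_trans (ext_le_q 0 S); case/andP: (ext_bounds 0 S).
apply: limr_le; first exact: ext_cvg.
by apply: nearW => t; case/andP: (ext_bounds t S).
Qed.

Lemma q_set0 : q finset.set0 = 1.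
Proof.
apply/le_anti; apply/andP; split; first by case/andP: (q_bounds finset.set0).
by rewrite -(ext_set0 0); apply: ext_le_q.
Qed.

Lemma q_harm S :
  q S = \sum_v \sum_(w | e v w) cw S v * q (moran_step S v w).
Proof.
have h1 : ((fun t => ext t.+1 S) @ \oo --> q S)%classic.
  by move: (ext_cvg S); rewrite -cvg_shiftS.
have h2 : ((fun t => ext t.+1 S) @ \oo -->
   \sum_v \sum_(w | e v w) cw S v * q (moran_step S v w))%classic.
  under eq_cvg do rewrite ext_S.
  apply: cvg_big => //; first exact: add_continuous.
  move=> v _; apply: cvg_big => //; first exact: add_continuous.
  move=> w _; apply: cvgMr; exact: ext_cvg.
exact: (cvg_unique _ h1 h2).
Qed.

Lemma balance S :
  \sum_v \sum_(w | e v w) cw S v * (q (moran_step S v w) - q S) = 0.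
Proof.
have -> : \sum_v \sum_(w | e v w) cw S v * (q (moran_step S v w) - q S) =
  \sum_v \sum_(w | e v w) cw S v * q (moran_step S v w) -
  \sum_v \sum_(w | e v w) cw S v * q S.
  rewrite -sumrB; apply: eq_bigr => v _; rewrite -sumrB.
  by apply: eq_bigr => w _; rewrite mulrBr.
rewrite -q_harm.
under eq_bigr do rewrite -mulr_suml.
by rewrite -mulr_suml total mul1r subrr.
Qed.

Lemma sum_ind (P : pred V) (a : V) :
  \sum_(w | P w) (w == a)%:R = (P a)%:R :> R.
Proof.
rewrite big_mkcond (bigD1 a) //= eqxx big1 ?addr0; first by case: (P a).
by move=> w /negbTE ->; case: (P w).
Qed.

Definition Iw (u : V) : R := \sum_v (e v u)%:R * (outdeg e v)%:R^-1.

Lemma fit_in (S : {set V}) v : v \in S -> fit S v = r.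
Proof. by rewrite /moran_fit => ->. Qed.
Lemma fit_notin (S : {set V}) v : v \notin S -> fit S v = 1.
Proof. by rewrite /moran_fit => /negbTE ->. Qed.

Lemma part_in (S : {set V}) v : v \in S ->
  - (r / tot S) * q S <= \sum_(w | e v w) cw S v * (q (moran_step S v w) - q S).
Proof.
move=> vS; have h : r / tot S = \sum_(w | e v w) cw S v by rewrite sum_cw_out fit_in.
rewrite h mulNr mulr_suml -sumrN.
apply: ler_sum => w _; rewrite -mulrN ler_wpM2l ?cw_ge0 // lerNl opprB lerBlDl lerDr.
by case/andP: (q_bounds (moran_step S v w)).
Qed.

Lemma part_out (S : {set V}) v : v \notin S ->
  (tot S)^-1 * (outdeg e v)%:R^-1 *
    (\sum_(a in S) (e v a)%:R * (q (S :\ a) - q S)) =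
  \sum_(w | e v w) cw S v * (q (moran_step S v w) - q S).
Proof.
move=> vS.
have cwE : cw S v = (tot S)^-1 * (outdeg e v)%:R^-1 by rewrite /cw fit_notin // mul1r.
rewrite mulr_sumr.
rewrite [RHS](bigID (fun w => w \in S)) /= [X in _ + X]big1 ?addr0; last first.
  move=> w /andP [_ wS]; rewrite /moran_step (negbTE vS).
  have -> : S :\ w = S by apply/finset.setDidPl; rewrite disjoint_sym disjoints1 wS.
  by rewrite subrr mulr0.
rewrite [RHS](eq_bigl (fun w => (w \in S) && e v w)); last by move=> w; rewrite andbC.
rewrite [RHS]big_mkcond [LHS]big_mkcond /=; apply: eq_bigr => w _.
case: ifP => // wS; rewrite /moran_step (negbTE vS) cwE.
by case: (e v w); rewrite ?mul1r ?mul0r ?mulr0.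
Qed.

Lemma Iw_ge0 u : 0 <= Iw u.
Proof. by apply: sumr_ge0 => v _; rewrite mulr_ge0 ?invr_ge0 ?ler0n. Qed.

Lemma single_bound (u : V) (beta : R) : ~~ e u u ->
  (forall w, e u w -> beta * q [set u] <= q (w |: [set u])) ->
  Iw u <= q [set u] * (r + Iw u - r * beta).
Proof.
move=> nuu Hb.
set S := [set u]; set T := tot S; set Q := q S.
have HT : 0 < T by apply: tot_gt0.
have B := balance S; rewrite (bigID (fun v => v \in S)) /= in B.
have Pin : r / T * ((beta - 1) * Q) <=
    \sum_(v | v \in S) \sum_(w | e v w) cw S v * (q (moran_step S v w) - Q).
  rewrite (big_pred1 u); last by move=> v; rewrite /S inE.
  have h : r / T = \sum_(w | e u w) cw S u by rewrite sum_cw_out fit_in // /S set11.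
  rewrite h mulr_suml; apply: ler_sum => w euw; rewrite ler_wpM2l ?cw_ge0 //.
  rewrite /moran_step /S set11 -/S.
  have := Hb w euw; rewrite -/S -/Q; lra.
have Pout : \sum_(v | v \notin S) \sum_(w | e v w) cw S v * (q (moran_step S v w) - Q)
    = T^-1 * ((1 - Q) * Iw u).
  have -> : Iw u = \sum_(v | v \notin S) (e v u)%:R * (outdeg e v)%:R^-1.
    rewrite /Iw (bigID (fun v => v \in S)) /= big1 ?add0r //.
    by move=> v; rewrite /S inE => /eqP ->; rewrite (negbTE nuu) mul0r.
  rewrite mulr_sumr mulr_sumr; apply: eq_bigr => v vS.
  rewrite -part_out // big_set1 /S finset.setDv q_set0 -/S -/Q -/T.
  by ring.
rewrite -/Q Pout in B.
have : T^-1 * (r * ((beta - 1) * Q) + (1 - Q) * Iw u) <= 0.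
  rewrite mulrDr -B lerD2r.
  have -> : T^-1 * (r * ((beta - 1) * Q)) = r / T * ((beta - 1) * Q) by ring.
  exact: Pin.
move=> H0; have := ler_wpM2l (ltW HT) H0.
rewrite mulr0 mulVKf ?gt_eqF // => H.
have := Iw_ge0 u; have := q_bounds S; rewrite -/Q => /andP [Q0 Q1].
nra.
Qed.
Lemma pair_bound (x a : V) : x != a ->
  (\sum_(v | v \notin [set x; a]) (e v a)%:R * (outdeg e v)%:R^-1) * q [set x]
  <= q [set x; a] * (2 * r + Iw x +
       \sum_(v | v \notin [set x; a]) (e v a)%:R * (outdeg e v)%:R^-1).
Proof.
move=> xa.
set S := [set x; a]; set T := tot S; set Q := q S.
set J := \sum_(v | v \notin S) (e v a)%:R * (outdeg e v)%:R^-1.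
pose Ix : R := \sum_(v | v \notin S) (e v x)%:R * (outdeg e v)%:R^-1.
have HT : 0 < T by apply: tot_gt0.
have B := balance S; rewrite (bigID (fun v => v \in S)) /= -/Q in B.
have Pin : \sum_(v in S) (- (r / T) * Q) <=
    \sum_(v in S) \sum_(w | e v w) cw S v * (q (moran_step S v w) - Q).
  by apply: ler_sum => v vS; exact: part_in.
rewrite sumr_const cards2 xa /= mulr2n in Pin.
have SDx : S :\ x = [set a].
  apply/setP => y; rewrite !inE; case: (eqVneq y x) => [->|//].
  by rewrite /= (negbTE xa).
have SDa : S :\ a = [set x].
  apply/setP => y; rewrite !inE; case: (eqVneq y a) => [->|]; last by rewrite orbF.
  by rewrite eq_sym (negbTE xa).
have Pout : T^-1 * (J * (q [set x] - Q) - Ix * Q) <=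
    \sum_(v | v \notin S) \sum_(w | e v w) cw S v * (q (moran_step S v w) - Q).
  rewrite /J /Ix mulr_suml mulr_suml -sumrB mulr_sumr; apply: ler_sum => v vS.
  rewrite -part_out // /S big_setU1 ?inE //= big_set1 -/S SDx SDa -/Q.
  have := q_bounds [set a]; case/andP => qa0 _.
  have o0 : 0 <= (outdeg e v)%:R^-1 :> R by rewrite invr_ge0 ler0n.
  have i0 : 0 <= T^-1 by rewrite invr_ge0 ltW.
  case: (e v x); case: (e v a); rewrite ?mul1r ?mul0r ?add0r ?addr0 ?subr0 ?sub0r.
  - by rewrite -/T -mulrA ler_wpM2l //; nra.
  - by rewrite -/T -mulrA ler_wpM2l //; nra.
  - by rewrite -/T -mulrA ler_wpM2l //; nra.
  - by rewrite oppr0 !mulr0.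
have IxI : Ix <= Iw x.
  rewrite /Iw (bigID (fun v => v \in S)) /= lerDr.
  by apply: sumr_ge0 => v _; rewrite mulr_ge0 ?invr_ge0 ?ler0n.
have : - (r / T) * Q + - (r / T) * Q + T^-1 * (J * (q [set x] - Q) - Ix * Q) <= 0.
  by rewrite -B; apply: lerD.
move=> H0; have := ler_wpM2l (ltW HT) H0.
rewrite mulr0 mulrDr mulVKf ?gt_eqF // [T * (_ + _)]mulrDr => H.
have H1 : T * (- (r / T) * Q) = - (r * Q).
  by field; rewrite gt_eqF.
rewrite H1 in H.
have := Iw_ge0 x; have := q_bounds S; rewrite -/Q => /andP [Q0 Q1].
have J0 : 0 <= J by apply: sumr_ge0 => v _; rewrite mulr_ge0 ?invr_ge0 ?ler0n.
nra.
Qed.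
End Gen.
Lemma big_option_law (R : Type) (idx : R) (op : Monoid.law idx) (T : finType)
  (F : option T -> R) :
  \big[op/idx]_v F v = op (F None) (\big[op/idx]_t F (Some t)).
Proof.
by rewrite ![index_enum _]unlock [@Finite.enum in LHS]unlock /= /option_enum big_cons big_map.
Qed.

Lemma megasum (R : Type) (idx : R) (op : Monoid.com_law idx) k l m
  (F : megastar_vertex k l m -> R) :
  \big[op/idx]_v F v =
  op (F None) (op (op (\big[op/idx]_(i < l) \big[op/idx]_(j < m) F (Some (inl (inl (i,j)))))
                      (\big[op/idx]_(i < l) F (Some (inl (inr i)))))
                  (\big[op/idx]_(i < l) \big[op/idx]_(j < k) F (Some (inr (i,j))))).
Proof.
rewrite big_option_law big_sumType big_sumType !pair_bigA.
by congr (op _ (op (op _ _) _)); apply: eq_bigr => -[].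
Qed.

Lemma sumn_const n c : (\sum_(i < n) c)%N = (n * c)%N.
Proof. by rewrite big_const_ord iter_addn_0 mulnC. Qed.

Lemma sumR_const (R : realType) n (c : R) : \sum_(i < n) c = c *+ n.
Proof. elim: n => [|n IH]; first by rewrite big_ord0.
by rewrite big_ord_recr /= IH mulrS addrC. Qed.

Section Mega.
Variables (k l m : nat).
Hypotheses (k0 : (0 < k)%N) (l0 : (0 < l)%N) (m0 : (0 < m)%N).
Local Notation V := (megastar_vertex k l m).
Local Notation e := (@megastar_edge k l m).
Definition res i j : V := Some (inl (inl (i, j))).
Definition fed i : V := Some (inl (inr i)).
Definition cli i j : V := Some (inr (i, j)).

Lemma outdegE v : outdeg e v = (\sum_w (e v w : nat))%N.
Proof. by rewrite /outdeg -sum1dep_card big_mkcond; apply: eq_bigr => w _; case: (e v w). Qed.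

Lemma sum_eq1 n (i : 'I_n) : (\sum_(i' < n) (i == i' : nat))%N = 1%N.
Proof. by rewrite (bigD1 i) //= eqxx big1 // => j /negbTE; rewrite eq_sym => ->. Qed.

Lemma outdeg_cen : outdeg e None = (l * m)%N.
Proof.
by rewrite outdegE megasum /= !sumn_const !muln0 !addn0 muln1.
Qed.

Lemma outdeg_res i j : outdeg e (res i j) = 1%N.
Proof.
by rewrite outdegE megasum /= !sumn_const !muln0 sum_eq1.
Qed.

Lemma outdeg_fed i : outdeg e (fed i) = k.
Proof.
rewrite outdegE megasum /= !sumn_const !muln0.
under eq_bigr do rewrite sumn_const.
by rewrite -big_distrr /= sum_eq1 muln1.
Qed.

Lemma sum_neq n (j : 'I_n) : (\sum_(j' < n) (j != j' : nat))%N = n.-1.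
Proof.
rewrite (bigD1 j) //= eqxx add0n.
rewrite (eq_bigr (fun _ => 1%N)) => [|j' /negbTE]; last by rewrite eq_sym => ->.
by rewrite sum1_card cardC1 card_ord.
Qed.

Lemma sum_clique n (i : 'I_l) (j : 'I_n) :
  (\sum_(i' < l) \sum_(j' < n) ((i == i') && (j != j') : nat))%N = n.-1.
Proof.
rewrite (bigD1 i) //= [X in (_ + X)%N]big1 ?addn0.
  by under eq_bigr do rewrite eqxx /=; rewrite sum_neq.
by move=> i' /negbTE; rewrite eq_sym => ->; rewrite big1.
Qed.

Lemma outdeg_cli i j : outdeg e (cli i j) = k.
Proof.
rewrite outdegE megasum /= !sumn_const !muln0 sum_clique /=.
by rewrite !add0n add1n prednK.
Qed.

Lemma outdeg_gt0 v : (0 < outdeg e v)%N.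
Proof.
case: v => [[[[i j]|i]|[i j]]|].
- by rewrite outdeg_res.
- by rewrite outdeg_fed.
- by rewrite outdeg_cli.
- by rewrite outdeg_cen muln_gt0 l0.
Qed.

Lemma no_loop v : ~~ e v v.
Proof. by case: v => [[[[i j]|i]|[i j]]|] //=; rewrite !eqxx. Qed.
Lemma sum_eq1' n (i : 'I_n) : (\sum_(i' < n) (i' == i : nat))%N = 1%N.
Proof. by rewrite (bigD1 i) //= eqxx big1 // => j /negbTE ->. Qed.

Lemma sum_clique' n (i : 'I_l) (j : 'I_n) :
  (\sum_(i' < l) \sum_(j' < n) ((i' == i) && (j' != j) : nat))%N = n.-1.
Proof.
rewrite -(sum_clique _ i j); apply: eq_bigr => i' _; apply: eq_bigr => j' _.
by rewrite eq_sym [j' == _]eq_sym.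
Qed.

Lemma indeg_res i j : (\sum_v (e v (res i j) : nat))%N = 1%N.
Proof. by rewrite megasum /= !sumn_const !muln0. Qed.

Lemma indeg_cli i j : (\sum_v (e v (cli i j) : nat))%N = k.
Proof.
rewrite megasum /= !sumn_const !muln0 sum_eq1' sum_clique'.
by rewrite !add0n add1n prednK.
Qed.

Lemma Iw_const (R : realType) u d : (forall v, e v u -> outdeg e v = d) ->
  Iw R V e u = (\sum_v (e v u : nat))%:R / d%:R.
Proof.
move=> H; rewrite /Iw natr_sum mulr_suml; apply: eq_bigr => v _.
case: (boolP (e v u)) => [evu|nevu]; [by rewrite H | idtac].
by rewrite !mul0r.
Qed.

Lemma Iw_res (R : realType) i j : Iw R V e (res i j) = ((l * m)%:R)^-1.
Proof.
rewrite (@Iw_const R _ (l * m)) ?indeg_res ?mul1r //.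
by case => [[[[i' j']|i']|[i' j']]|] //= _; rewrite outdeg_cen.
Qed.

Lemma Iw_cli (R : realType) i j : Iw R V e (cli i j) = 1.
Proof.
rewrite (@Iw_const R _ k) ?indeg_cli ?mulfV ?pnatr_eq0 -?lt0n //.
case => [[[[i' j']|i']|[i' j']]|] //= _; first by rewrite outdeg_fed.
by rewrite outdeg_cli.
Qed.

Lemma J_res (R : realType) i j :
  \sum_(v | v \notin [set res i j; fed i]) (e v (fed i))%:R * (outdeg e v)%:R^-1
  = (m.-1)%:R :> R.
Proof.
have H : forall v, e v (fed i) -> outdeg e v = 1%N.
  by case => [[[[i' j']|i']|[i' j']]|] //= _; rewrite outdeg_res.
transitivity (\sum_(v | v \notin [set res i j; fed i]) ((e v (fed i) : nat)%:R : R)).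
  apply: eq_bigr => v _; case: (boolP (e v (fed i))) => [ev|_]; last by rewrite !mul0r.
  have H1 : (outdeg e v)%:R = 1 :> R by rewrite H.
  by rewrite H1 invr1 mulr1.
have Eall : \sum_v ((e v (fed i) : nat)%:R : R) = m%:R.
  rewrite -natr_sum megasum /= !sumn_const !muln0 !addn0 add0n.
  under eq_bigr do rewrite sumn_const.
  by rewrite -big_distrr /= sum_eq1' muln1.
have E : (\sum_(v in [set res i j; fed i]) ((e v (fed i) : nat)%:R : R)) = 1.
  rewrite big_setU1 ?inE //= big_set1 /= eqxx /=.
  by rewrite addr0.
move: Eall; rewrite (bigID (fun v => v \in [set res i j; fed i])) /= E => H2.
apply: (@addrI _ 1); rewrite H2.
by rewrite -{1}(prednK m0) mulrS.
Qed.

Lemma two_gt0 (R : realType) : 0 < 2 :> R. Proof. by []. Qed.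

Lemma qb (R : realType) S : 0 <= moran_extinction e (2 : R) S <= 1.
Proof. exact: (@q_bounds R V e 2 (two_gt0 R) outdeg_gt0 None S). Qed.

Lemma q_cli (R : realType) i j :
  1 <= moran_extinction e (2 : R) [set cli i j] * 3.
Proof.
have := @single_bound R V e 2 (two_gt0 R) outdeg_gt0 None (cli i j) 0 (no_loop _).
rewrite Iw_cli mulr0 subr0 => h.
have : 1 <= moran_extinction e (2 : R) [set cli i j] * (2 + 1).
  apply: h => w _; rewrite mul0r.
  by case/andP: (qb R [set w; cli i j]).
lra.
Qed.

Lemma q_res (R : realType) i j :
  1 <= moran_extinction e (2 : R) [set res i j] * (11 * l%:R).
Proof.
set x := res i j; set a := fed i.
have xa : x != a by [].
have HP := @pair_bound R V e 2 (two_gt0 R) outdeg_gt0 None x a xa.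
rewrite J_res Iw_res in HP.
set q := moran_extinction e (2 : R).
set I : R := ((l * m)%:R)^-1.
set J : R := (m.-1)%:R.
fold q I J in HP.
have I0 : 0 < I by rewrite invr_gt0 ltr0n muln_gt0 l0.
have J0 : 0 <= J by rewrite ler0n.
set D := 2 * 2 + I + J.
have D0 : 0 < D by rewrite /D; lra.
have := @single_bound R V e 2 (two_gt0 R) outdeg_gt0 None x (J / D) (no_loop _).
rewrite Iw_res -/I -/q => h.
have {h} h : I <= q [set x] * (2 + I - 2 * (J / D)).
  apply: h => w; case: w => [[[[i' j']|i']|[i' j']]|] //= /eqP <-.
  rewrite mulrAC ler_pdivrMr // -/a.
  have -> : [set a; x] = [set x; a] by rewrite /= finset.setUC.
  exact: HP.
have Q0 : 0 <= q [set x] by case/andP: (qb R [set x]).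
set L : R := l%:R; set M : R := m%:R.
have L1 : 1 <= L by rewrite ler1n.
have M1 : 1 <= M by rewrite ler1n.
have JM : J = M - 1 by rewrite /J /M -{2}(prednK m0) mulrS; ring.
have ILM : I * L * M = 1 by rewrite /I /L /M -mulrA -natrM mulVf // pnatr_eq0 -lt0n muln_gt0 l0.
have IM : I * M <= 1.
  have : I * M * 1 <= I * M * L by rewrite ler_wpM2l // mulr_ge0 // ?ltW // (le_trans ler01 M1).
  by rewrite mulr1 mulrAC ILM.
have key : 2 + I - 2 * (J / D) <= 11 * L * I.
  have H2 : (2 + I - 11 * L * I) * D <= 2 * J.
    have h1 : 0 <= I * (L - 1) by apply: mulr_ge0; [apply: ltW | lra].
    have h2 : 0 <= I * I * (L - 1) by apply: mulr_ge0; [apply: mulr_ge0; apply: ltW | lra].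
    rewrite /D JM; nra.
  have H3 : 2 + I - 11 * L * I <= 2 * J / D by rewrite ler_pdivlMr.
  rewrite mulrA; lra.
have : I <= q [set x] * (11 * L * I).
  apply: le_trans h _; rewrite ler_wpM2l //.
have -> : q [set x] * (11 * L * I) = (q [set x] * (11 * L)) * I by ring.
rewrite -{1}[I]mul1r ler_pM2r //.
Qed.

End Mega.

Lemma megasumR (R : realType) k l m (F : megastar_vertex k l m -> R) :
  \sum_v F v =
  F None + (((\sum_(i < l) \sum_(j < m) F (Some (inl (inl (i,j)))))
            + (\sum_(i < l) F (Some (inl (inr i)))))
         + (\sum_(i < l) \sum_(j < k) F (Some (inr (i,j))))).
Proof. exact: megasum. Qed.

Lemma mulrnn (R: realType) (x : R) m l : x *+ m *+ l = x * (m * l)%:R.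
Proof. by rewrite -mulrnA mulr_natr. Qed.

Lemma mega_bound (R : realType) k l m : (0 < k)%N -> (0 < l)%N -> (0 < m)%N ->
  (Num.sqrt (#|megastar_vertex k l m|%:R))^-1 / (52 * 2 ^+ 2) <
  megastar_extinction (2 : R) k l m.
Proof.
move=> k0 l0 m0.
rewrite /megastar_extinction /moran_extinction_unif.
set q := moran_extinction (@megastar_edge k l m) (2 : R).
have nE : #|megastar_vertex k l m| = (l * m + l + l * k).+1.
  by rewrite card_option card_sum card_sum !card_prod !card_ord.
set L : R := l%:R; set M : R := m%:R; set K : R := k%:R.
have L1 : 1 <= L by rewrite ler1n.
have M1 : 1 <= M by rewrite ler1n.
have K1 : 1 <= K by rewrite ler1n.
have r1 : forall i j, (11 * L)^-1 <= q [set res k l m i j].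
  move=> i j; rewrite -[X in X <= _]mul1r ler_pdivrMr; last lra.
  exact: q_res.
have c1 : forall i j, 3^-1 <= q [set cli k l m i j].
  move=> i j; rewrite -[X in X <= _]mul1r ler_pdivrMr; last lra.
  exact: q_cli.
have Hs : M / 11 + L * K / 3 <= \sum_v q [set v].
  rewrite megasumR.
  have A : (11 * L)^-1 *+ m *+ l <= \sum_(i < l) \sum_(j < m) q [set res k l m i j].
    rewrite -sumR_const; apply: ler_sum => i _; rewrite -sumR_const.
    by apply: ler_sum => j _; apply: r1.
  have C : 3^-1 *+ k *+ l <= \sum_(i < l) \sum_(j < k) q [set cli k l m i j].
    rewrite -sumR_const; apply: ler_sum => i _; rewrite -sumR_const.
    by apply: ler_sum => j _; apply: c1.
  have Z1 : 0 <= q [set None] by case/andP: (@qb k l m k0 l0 m0 R [set None]).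
  have Z2 : 0 <= \sum_(i < l) q [set Some (inl (inr i))].
    by apply: sumr_ge0 => i _; case/andP: (@qb k l m k0 l0 m0 R [set Some (inl (inr i))]).
  have EA : (11 * L)^-1 *+ m *+ l = M / 11.
    rewrite mulrnn natrM -/L -/M; field; by rewrite pnatr_eq0 -lt0n.
  have EC : 3^-1 *+ k *+ l = L * K / 3.
    by rewrite mulrnn natrM -/L -/K; field.
  rewrite EA /res in A; rewrite EC /cli in C; lra.
set n := #|megastar_vertex k l m|.
have n0 : (0 < n)%N by rewrite /n nE.
set s := Num.sqrt (n%:R : R).
have s0 : 0 < s by rewrite /s sqrtr_gt0 ltr0n.
have sn : s * s = n%:R by rewrite -expr2 /s sqr_sqrtr // ler0n.
set X := M + L * K.
have Hn : (n <= 3 * (m + l * k) ^ 2)%N by rewrite /n nE; nia.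
have HnR : n%:R <= 3 * X ^+ 2 :> R.
  by move: Hn; rewrite -(ler_nat R) natrM natrX natrD natrM.
have sX : s <= 2 * X.
  have X0 : 0 < X by rewrite /X; nra.
  rewrite -sn in HnR; nra.
set Y := \sum_v q [set v].
have E : (n%:R)^-1 * Y * (52 * 2 ^+ 2) = s^-1 * (Y * 208 / s).
  rewrite -sn; field; by rewrite gt_eqF.
rewrite ltr_pdivrMr; last by [].
rewrite E -{1}[s^-1]mulr1 ltr_pM2l ?invr_gt0 // ltr_pdivlMr // mul1r.
have LK : 0 <= L * K by apply: mulr_ge0; lra.
have XE : X = M + L * K by [].
rewrite /Y; lra.
Qed.

Theorem theorem1p11 (R : realType) (F : set (nat * nat * nat)) :
  (forall k l m : nat, F (k, l, m) -> [/\ (0 < k)%N, (0 < l)%N & (0 < m)%N]) ->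
  infinite_set F ->
  ~ megastar_family_upto_fixating
      (fun (r : R) (n : nat) => (Num.sqrt (n%:R))^-1 / (52 * r ^+ 2)) F.
Proof.
move=> Hpos Hinf Hfix.
have [n0 Hn0] := Hfix 2 (ltr_nat R 1 2).
have [[[k l] m] [Ft Hn]] : exists t : nat * nat * nat,
    F t /\ (n0 <= #|megastar_vertex t.1.1 t.1.2 t.2|)%N.
  apply: contrapT => H; apply: Hinf.
  pose f := fun t : 'I_n0 * 'I_n0 * 'I_n0 => ((val t.1.1, val t.1.2), val t.2).
  apply: (sub_finite_set _ (finite_image f (@finite_finset _ setT))).
  move=> [[k l] m] Fklm.
  have [k0 l0 m0] := Hpos k l m Fklm.
  have Hlt : (#|megastar_vertex k l m| < n0)%N.
    by rewrite ltnNge; apply/negP => Hle; apply: H; exists ((k, l), m).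
  have nE : #|megastar_vertex k l m| = (l * m + l + l * k).+1.
    by rewrite card_option card_sum card_sum !card_prod !card_ord.
  rewrite nE in Hlt.
  have hk : (k < n0)%N by nia.
  have hl : (l < n0)%N by nia.
  have hm : (m < n0)%N by nia.
  by exists ((Ordinal hk, Ordinal hl), Ordinal hm).
have [k0 l0 m0] := Hpos k l m Ft.
have := Hn0 k l m Ft Hn.
by rewrite leNgt mega_bound.
Qed.
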